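(* Let $G$ be a group with a left-invariant metric $d$, and for $r>0$ let $G_r$ be the subgroup of $G$ generated by the ball $B(1_G,r)=\{g: d(1_G,g)<r\}$. If $\operatorname{asdim}(G_r)\le n$ for every $r>0$ (with the restricted metric), then $\operatorname{asdim}(G,d)\le n$.
   Context: For a metric space $Z$, $\operatorname{asdim}(Z)\le n$ iff for every $r>0$ there are $D<\infty$ and families $\mathcal U_1,\dots,\mathcal U_{n+1}$ of subsets of $Z$ covering $Z$, each $r$-disjoint (points in different members of a family are at distance $\ge r$), with members of diameter $\le D$. *)

(* Defs.v *)
From Stdlib Require Import Reals.
Open Scope R_scope.

Record is_group {G : Type} (mul : G -> G -> G) (inv : G -> G) (e : G) : Prop := {
  grp_assoc : forall x y z, mul x (mul y z) = mul (mul x y) z;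
  grp_id_l : forall x, mul e x = x;
  grp_id_r : forall x, mul x e = x;
  grp_inv_l : forall x, mul (inv x) x = e;
  grp_inv_r : forall x, mul x (inv x) = e
}.

Record is_metric {G : Type} (d : G -> G -> R) : Prop := {
  met_nonneg : forall x y, 0 <= d x y;
  met_eq0 : forall x y, d x y = 0 <-> x = y;
  met_sym : forall x y, d x y = d y x;
  met_triangle : forall x y z, d x z <= d x y + d y z
}.

Definition left_invariant {G : Type} (mul : G -> G -> G) (d : G -> G -> R) : Prop :=
  forall g x y, d (mul g x) (mul g y) = d x y.

Inductive gen_subgroup {G : Type} (mul : G -> G -> G) (inv : G -> G) (e : G)
    (S : G -> Prop) : G -> Prop :=
  | gs_base : forall x, S x -> gen_subgroup mul inv e S x
  | gs_id : gen_subgroup mul inv e S e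
  | gs_mul : forall x y, gen_subgroup mul inv e S x -> gen_subgroup mul inv e S y ->
      gen_subgroup mul inv e S (mul x y)
  | gs_inv : forall x, gen_subgroup mul inv e S x -> gen_subgroup mul inv e S (inv x).

Definition ball {G : Type} (d : G -> G -> R) (c : G) (r : R) : G -> Prop :=
  fun g => d c g < r.

(* A family is a predicate on subsets of G. *)
Definition asdim_le {G : Type} (d : G -> G -> R) (Z : G -> Prop) (n : nat) : Prop :=
  forall r : R, 0 < r ->
  exists (D : R) (U : nat -> (G -> Prop) -> Prop),
    (forall i A, (i < S n)%nat -> U i A -> forall x, A x -> Z x) /\
    (forall z, Z z -> exists i A, (i < S n)%nat /\ U i A /\ A z) /\
    (forall i A B x y, (i < S n)%nat -> U i A -> U i B -> A <> B ->
       A x -> B y -> r <= d x y) /\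
    (forall i A x y, (i < S n)%nat -> U i A -> A x -> A y -> d x y <= D).

(* Main.v *)
Require Import Defs.
From Stdlib Require Import Reals Lra.
From Stdlib Require Import ClassicalEpsilon FunctionalExtensionality PropExtensionality Classical.
Open Scope R_scope.

Section Aux.
Variables (G : Type) (mul : G -> G -> G) (inv : G -> G) (e : G).
Hypothesis Hg : is_group mul inv e.

Lemma inv_unique x y : mul x y = e -> y = inv x.
Proof.
  intro H. pose proof (grp_assoc _ _ _ Hg) as grp_assoc0; pose proof (grp_id_l _ _ _ Hg) as grp_id_l0; pose proof (grp_id_r _ _ _ Hg) as grp_id_r0; pose proof (grp_inv_l _ _ _ Hg) as grp_inv_l0; pose proof (grp_inv_r _ _ _ Hg) as grp_inv_r0.
  rewrite <- (grp_id_l0 y), <- (grp_inv_l0 x), <- grp_assoc0, H, grp_id_r0. reflexivity.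
Qed.

Lemma inv_mul x y : inv (mul x y) = mul (inv y) (inv x).
Proof.
  symmetry. apply inv_unique. pose proof (grp_assoc _ _ _ Hg) as grp_assoc0; pose proof (grp_id_l _ _ _ Hg) as grp_id_l0; pose proof (grp_id_r _ _ _ Hg) as grp_id_r0; pose proof (grp_inv_l _ _ _ Hg) as grp_inv_l0; pose proof (grp_inv_r _ _ _ Hg) as grp_inv_r0.
  rewrite <- grp_assoc0, (grp_assoc0 y), grp_inv_r0, grp_id_l0, grp_inv_r0. reflexivity.
Qed.

Lemma inv_inv x : inv (inv x) = x.
Proof. symmetry. apply inv_unique. pose proof (grp_assoc _ _ _ Hg) as grp_assoc0; pose proof (grp_id_l _ _ _ Hg) as grp_id_l0; pose proof (grp_id_r _ _ _ Hg) as grp_id_r0; pose proof (grp_inv_l _ _ _ Hg) as grp_inv_l0; pose proof (grp_inv_r _ _ _ Hg) as grp_inv_r0. auto. Qed.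
End Aux.

Theorem mainTheorem11 (G : Type) (mul : G -> G -> G) (inv : G -> G) (e : G)
  (d : G -> G -> R) (n : nat)
  (Hgrp : is_group mul inv e) (Hmet : is_metric d)
  (Hinv : left_invariant mul d)
  (Hsub : forall r : R, 0 < r ->
     asdim_le d (gen_subgroup mul inv e (ball d e r)) n) :
  asdim_le d (fun _ => True) n.
Proof.
  intros r Hr.
  set (H := gen_subgroup mul inv e (ball d e r)).
  destruct (Hsub r Hr r Hr) as [D [U [HU1 [HU2 [HU3 HU4]]]]].
  set (rel := fun x y => H (mul (inv x) y)).
  assert (Hrefl : forall x, rel x x).
  { intro x. unfold rel. rewrite (grp_inv_l _ _ _ Hgrp). apply gs_id. }
  assert (Hsym : forall x y, rel x y -> rel y x).
  { intros x y Hxy. unfold rel in *. apply gs_inv in Hxy.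
    rewrite (inv_mul _ _ _ _ Hgrp), (inv_inv _ _ _ _ Hgrp) in Hxy. exact Hxy. }
  assert (Htrans : forall x y z, rel x y -> rel y z -> rel x z).
  { intros x y z H1 H2. unfold rel in *. pose proof (gs_mul _ _ _ _ _ _ H1 H2) as H3.
    pose proof (grp_assoc _ _ _ Hgrp) as grp_assoc0; pose proof (grp_id_l _ _ _ Hgrp) as grp_id_l0; pose proof (grp_inv_l _ _ _ Hgrp) as grp_inv_l0; pose proof (grp_inv_r _ _ _ Hgrp) as grp_inv_r0.
    rewrite <- grp_assoc0, (grp_assoc0 y), grp_inv_r0, grp_id_l0 in H3. exact H3. }
  set (rep := fun x => epsilon (inhabits e) (fun y => rel x y)).
  assert (Hrep : forall x, rel x (rep x)).
  { intro x. unfold rep. apply (epsilon_spec (inhabits e) (fun y => rel x y)).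
    exists x. apply Hrefl. }
  assert (Hrepeq : forall x y, rel x y -> rep x = rep y).
  { intros x y Hxy. unfold rep.
    assert (E : (fun z => rel x z) = (fun z => rel y z)).
    { apply functional_extensionality. intro z. apply propositional_extensionality.
      split; intro; eauto. }
    rewrite E. reflexivity. }
  set (tr := fun c (A : G -> Prop) => fun z => exists a, A a /\ z = mul c a).
  exists D, (fun i B => exists x A, U i A /\ B = tr (rep x) A).
  split; [|split; [|split]].
  - auto.
  - intros z _. set (c := rep z).
    assert (Hc : H (mul (inv c) z)) by (apply Hsym, Hrep).
    destruct (HU2 _ Hc) as [i [A [Hi [HA Haz]]]].
    exists i, (tr c A). split; [exact Hi|]. split.
    + exists z, A. auto.
    + exists (mul (inv c) z). split; [exact Haz|].
      pose proof (grp_assoc _ _ _ Hgrp) as grp_assoc0; pose proof (grp_id_l _ _ _ Hgrp) as grp_id_l0; pose proof (grp_inv_l _ _ _ Hgrp) as grp_inv_l0; pose proof (grp_inv_r _ _ _ Hgrp) as grp_inv_r0. rewrite grp_assoc0, grp_inv_r0, grp_id_l0. reflexivity.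
  - intros i A' B' x y Hi [x1 [A [HA ->]]] [x2 [B [HB ->]]] Hne [a [Ha ->]] [b [Hb ->]].
    destruct (classic (rep x1 = rep x2)) as [Heq|Hneq].
    + rewrite Heq in *. rewrite Hinv. apply (HU3 i A B); auto.
      intro; subst; apply Hne; reflexivity.
    + destruct (Rlt_le_dec (d (mul (rep x1) a) (mul (rep x2) b)) r) as [Hlt|Hle]; [|exact Hle].
      exfalso. apply Hneq. apply Hrepeq.
      assert (Hxy : rel (mul (rep x1) a) (mul (rep x2) b)).
      { unfold rel, H. apply gs_base. unfold ball.
        rewrite <- (grp_inv_l _ _ _ Hgrp (mul (rep x1) a)), Hinv. exact Hlt. }
      assert (Ha' : rel (rep x1) (mul (rep x1) a)).
      { unfold rel. pose proof (grp_assoc _ _ _ Hgrp) as grp_assoc0; pose proof (grp_id_l _ _ _ Hgrp) as grp_id_l0; pose proof (grp_inv_l _ _ _ Hgrp) as grp_inv_l0; pose proof (grp_inv_r _ _ _ Hgrp) as grp_inv_r0. rewrite grp_assoc0, grp_inv_l0, grp_id_l0.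
        exact (HU1 i A Hi HA a Ha). }
      assert (Hb' : rel (rep x2) (mul (rep x2) b)).
      { unfold rel. pose proof (grp_assoc _ _ _ Hgrp) as grp_assoc0; pose proof (grp_id_l _ _ _ Hgrp) as grp_id_l0; pose proof (grp_inv_l _ _ _ Hgrp) as grp_inv_l0; pose proof (grp_inv_r _ _ _ Hgrp) as grp_inv_r0. rewrite grp_assoc0, grp_inv_l0, grp_id_l0.
        exact (HU1 i B Hi HB b Hb). }
      eapply Htrans; [apply Hrep|]. eapply Htrans; [exact Ha'|].
      eapply Htrans; [exact Hxy|]. apply Hsym. eapply Htrans; [apply Hrep|exact Hb'].
  - intros i A' x y Hi [x1 [A [HA ->]]] [a [Ha ->]] [b [Hb ->]].
    rewrite Hinv. apply (HU4 i A); auto.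
Qed.
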